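(* Let $F$ be a cellular automaton on $A^{\mathbb N}$ with diameter $\delta$ and local rule $f$. For every $u\in A^\delta$, if $\mathfrak d_L(u^\infty,F(u^\infty))=0$, then there exists $k\in\{0,\dots,\delta-1\}$ such that $F(u^\infty)=\sigma^k(u^\infty)$.
   Context: $A$ is a finite alphabet; $u^\infty=uuu\cdots\in A^{\mathbb N}$; $\sigma(x)_i=x_{i+1}$; $x_{[i,j)}=x_i\cdots x_{j-1}$. A cellular automaton with diameter $\delta\ge1$ is $F:A^{\mathbb N}\to A^{\mathbb N}$ with $F(x)_i=f(x_{[i,i+\delta)})$ for a local rule $f:A^\delta\to A$. The Levenshtein distance is $d_L(u,v)=\frac{|u|+|v|}{2}-\ell$, $\ell$ the length of a longest common subsequence; the Feldman pseudo-metric is $\mathfrak d_L(x,y)=\limsup_{l\to\infty}d_L(x_{[0,l)},y_{[0,l)})/l$. *)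

(* Defs.v *)
From mathcomp Require Import all_boot all_order all_algebra.
From mathcomp Require Import all_classical all_reals all_analysis.
Set Implicit Arguments. Unset Strict Implicit. Unset Printing Implicit Defensive.
Import Order.TTheory GRing.Theory Num.Theory.
Local Open Scope ring_scope.

Section Defs.
Variable A : finType.

Definition cshift (x : nat -> A) : nat -> A := fun i => x i.+1.

Definition CA (delta : nat) (f : delta.-tuple A -> A) (x : nat -> A) : nat -> A :=
  fun i => f [tuple x (i + val j) | j < delta].

Definition uinf (delta : nat) (u : delta.-tuple A) (hd : (0 < delta)%N) : nat -> A :=
  fun i => tnth u (Ordinal (ltn_pmod i hd)).

Definition lcs (u v : seq A) : nat :=
  (\max_(m : (size u).-tuple bool | subseq (mask m u) v) size (mask m u))%N.

Definition levenshtein (R : realType) (u v : seq A) : R :=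
  ((size u + size v)%:R / 2) - (lcs u v)%:R.

Definition prefix (x : nat -> A) (l : nat) : seq A := mkseq x l.

Definition feldman (R : realType) (x y : nat -> A) : \bar R :=
  limn_esup (fun l : nat => (levenshtein R (prefix x l) (prefix y l) / l%:R)%:E).
End Defs.

(* Main.v *)
Require Import Defs.
From mathcomp Require Import all_boot all_order all_algebra.
From mathcomp Require Import all_classical all_reals all_analysis.
From mathcomp Require Import zify ring lra.
Import Order.TTheory GRing.Theory Num.Theory.
Local Open Scope ring_scope.
Local Open Scope classical_set_scope.
Local Open Scope nat_scope.

Lemma nth_gap (I : seq nat) t k : sorted ltn I -> t + k < size I ->
  nth 0 I t + k <= nth 0 I (t + k).
Proof.
move=> sI; elim: k => [|k IH] Hk; first by rewrite !addn0.
have h1 : nth 0 I t + k <= nth 0 I (t + k) by apply: IH; lia.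
have h2 : nth 0 I (t + k) < nth 0 I (t + k.+1).
  apply: (sorted_ltn_nth ltn_trans) => //; rewrite ?inE; lia.
lia.
Qed.

Definition Gd (I J : seq nat) t := (nth 0 I t - t) + (nth 0 J t - t).

Lemma Gmono (I J : seq nat) L : sorted ltn I -> sorted ltn J -> size I = L -> size J = L ->
  forall t t', t <= t' < L -> Gd I J t <= Gd I J t'.
Proof.
move=> sI sJ szI szJ t t' /andP[h1 h2].
have gI := nth_gap I t (t' - t) sI. have gJ := nth_gap J t (t' - t) sJ.
have gI0 := nth_gap I 0 t sI. have gJ0 := nth_gap J 0 t sJ.
rewrite subnKC // add0n szI in gI gI0; rewrite subnKC // add0n szJ in gJ gJ0.
have := gI h2; have := gJ h2; have := gI0 (leq_ltn_trans h1 h2); have := gJ0 (leq_ltn_trans h1 h2).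
rewrite /Gd; lia.
Qed.

Lemma Gbound (I J : seq nat) L l : sorted ltn I -> sorted ltn J -> size I = L -> size J = L ->
  all (fun i => i < l) I -> all (fun i => i < l) J ->
  forall t, t < L -> Gd I J t <= 2 * (l - L).
Proof.
move=> sI sJ szI szJ aI aJ t ht.
have lastI : nth 0 I L.-1 < l by apply: (allP aI); apply: mem_nth; rewrite szI; lia.
have lastJ : nth 0 J L.-1 < l by apply: (allP aJ); apply: mem_nth; rewrite szJ; lia.
have gI := nth_gap I t (L.-1 - t) sI. have gJ := nth_gap J t (L.-1 - t) sJ.
have gI0 := nth_gap I 0 t sI. have gJ0 := nth_gap J 0 t sJ.
have e : t + (L.-1 - t) = L.-1 by lia.
rewrite e add0n szI in gI gI0; rewrite e add0n szJ in gJ gJ0.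
have h2 : L.-1 < L by lia.
have := gI h2; have := gJ h2; have := gI0 ht; have := gJ0 ht.
rewrite /Gd; lia.
Qed.

Lemma Gconst (I J : seq nat) L dl t : sorted ltn I -> sorted ltn J -> size I = L -> size J = L ->
  t + dl.-1 < L -> Gd I J t = Gd I J (t + dl.-1) ->
  forall s, s < dl -> nth 0 I (t + s) = nth 0 I t + s /\ nth 0 J (t + s) = nth 0 J t + s.
Proof.
move=> sI sJ szI szJ hL hG s hs.
have gI := nth_gap I t s sI. have gJ := nth_gap J t s sJ.
have gI1 := nth_gap I (t + s) (dl.-1 - s) sI. have gJ1 := nth_gap J (t + s) (dl.-1 - s) sJ.
have gI0 := nth_gap I 0 t sI. have gJ0 := nth_gap J 0 t sJ.
have e : t + s + (dl.-1 - s) = t + dl.-1 by lia.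
rewrite e add0n szI in gI gI0 gI1; rewrite e add0n szJ in gJ gJ0 gJ1.
have h1 : t + s < L by lia. have h0 : t < L by lia.
move: (gI h1) (gJ h1) (gI1 hL) (gJ1 hL) (gI0 h0) (gJ0 h0) hG; rewrite /Gd; lia.
Qed.
Lemma key_lemma (G : nat -> nat) B dl L : 0 < dl -> B * dl <= L ->
  (forall t t', t <= t' < L -> G t <= G t') ->
  forall b, b < B -> (exists b', b' <= b /\ G (b' * dl) = G (b' * dl + dl.-1))
      \/ b.+1 <= G (b * dl + dl.-1).
Proof.
move=> dpos HB Gmono.
  elim=> [|b IH] hb.
    have := Gmono 0 dl.-1; rewrite mul0n add0n.
    case: (eqVneq (G 0) (G dl.-1)) => [e|ne] hm; first by left; exists 0; rewrite mul0n add0n.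
    right; have : 0 <= dl.-1 < L by nia. move/hm; lia.
  have hb' : b < B by lia.
  have hpos : b.+1 * dl + dl.-1 < L.
    have : b.+2 * dl <= B * dl by rewrite leq_mul2r; lia. nia.
  case: (IH hb') => [[b' [hb1 hb2]]|hi]; first by left; exists b'; split => //; lia.
  have m1 := Gmono (b * dl + dl.-1) (b.+1 * dl).
  have m2 := Gmono (b.+1 * dl) (b.+1 * dl + dl.-1).
  case: (eqVneq (G (b.+1 * dl)) (G (b.+1 * dl + dl.-1))) => [e|ne].
    by left; exists b.+1.
  right.
  have c1 : b * dl + dl.-1 <= b.+1 * dl < L by rewrite mulSn; nia.
  have c2 : b.+1 * dl <= b.+1 * dl + dl.-1 < L by nia.
  have := m1 c1; have := m2 c2; lia.
Qed.

Lemma core (I J : seq nat) (l L dl : nat) :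
  sorted ltn I -> sorted ltn J -> size I = L -> size J = L ->
  all (fun i => i < l) I -> all (fun i => i < l) J -> 0 < dl ->
  (2 * (l - L) + 1) * dl <= L ->
  exists t, t + dl <= L /\ forall s, s < dl ->
    nth 0 I (t + s) = nth 0 I t + s /\ nth 0 J (t + s) = nth 0 J t + s.
Proof.
move=> sI sJ szI szJ aI aJ dpos HB.
have key := @key_lemma (Gd I J) _ dl L dpos HB (Gmono I J L sI sJ szI szJ).
have hB1 : (2 * (l - L) + 1).-1 < 2 * (l - L) + 1 by rewrite addn1.
have [[b [hb1 hb2]]|hbad] := key _ hB1.
  have hpos : b * dl + dl.-1 < L.
    have : b.+1 * dl <= (2 * (l - L) + 1) * dl by rewrite leq_mul2r; lia.
    rewrite mulSn; nia.
  exists (b * dl); split; first lia.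
  exact: (Gconst I J L dl (b * dl) sI sJ szI szJ hpos hb2).
have hpos : (2 * (l - L) + 1).-1 * dl + dl.-1 < L.
  move: HB; rewrite addn1 /= mulSn; nia.
have := Gbound I J L l sI sJ szI szJ aI aJ _ hpos; lia.
Qed.
Local Open Scope ring_scope.
Lemma feld_small (R : realType) (v : nat -> R) : (forall n, 0 <= v n) ->
  limn_esup (fun n => (v n)%:E) = 0%E -> forall e : R, 0 < e -> forall M, exists n, (M <= n)%N /\ v n < e.
Proof.
move=> v0 h e e0 M.
have c : (fun n => (v n)%:E) @ \oo --> 0%E.
  apply: limn_esup_le_cvg; first by rewrite h.
  by move=> n; rewrite lee_fin.
have c2 : (fun n => v n) @ \oo --> (0:R^o).
  have := fine_cvg c; apply; exact: _.
have := @cvgr_lt _ _ _ _ _ _ c2 e e0.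

move=> [N _ HN].
exists (maxn N M); split; first exact: leq_maxr.
by have := HN (maxn N M) (leq_maxl _ _).
Qed.

Lemma iter_cshift (A : finType) k (x : nat -> A) i : iter k (@cshift A) x i = x (i + k)%N.
Proof.
elim: k i => [|k IH] i /=; first by rewrite addn0.
by rewrite /cshift IH addSnnS.
Qed.

Lemma lcs_le {A : finType} (p q : seq A) : (lcs p q <= size p)%N.
Proof.
rewrite /lcs; apply/bigmax_leqP => m _.
exact: size_subseq (mask_subseq _ _).
Qed.

Lemma lcs_wit {A : finType} (p q : seq A) :
  exists m : (size p).-tuple bool, subseq (mask m p) q /\ lcs p q = size (mask m p).
Proof.
have [|m Hm Heq] := @eq_bigmax_cond _ [pred m : (size p).-tuple bool | subseq (mask m p) q]
   (fun m => size (mask m p)).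
  apply/card_gt0P; exists (nseq_tuple (size p) false).
  by rewrite inE /= mask_false sub0seq.
exists m; split; first by move: Hm; rewrite inE.
rewrite /lcs -Heq; apply: eq_bigl => i; by rewrite inE.
Qed.

Theorem lemmal (R : realType) (A : finType) (delta : nat) (hd : (0 < delta)%N)
  (f : delta.-tuple A -> A) (u : delta.-tuple A) :
  feldman R (uinf u hd) (CA f (uinf u hd)) = 0%E ->
  exists k : nat, (k < delta)%N /\ CA f (uinf u hd) = iter k (@cshift A) (uinf u hd).
Proof.
set x := uinf u hd; set y := CA f x => H.
have hx : forall i j, (i %% delta = j %% delta)%N -> x i = x j.
  move=> i j e; rewrite /x /uinf; congr tnth; exact: val_inj.
have hy : forall i j, (i %% delta = j %% delta)%N -> y i = y j.
  move=> i j e; rewrite /y /CA; congr f; apply: eq_from_tnth => k; rewrite !tnth_map.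
  by apply: hx; rewrite -modnDml e modnDml.
pose v l := levenshtein R (Defs.prefix x l) (Defs.prefix y l) / l%:R.
have levE : forall l, levenshtein R (Defs.prefix x l) (Defs.prefix y l) = ((l - lcs (Defs.prefix x l) (Defs.prefix y l))%N)%:R.
  move=> l; rewrite /levenshtein /Defs.prefix !size_mkseq natrB; last first.
    by have := lcs_le (mkseq x l) (mkseq y l); rewrite size_mkseq.
  by congr (_ - _); rewrite natrD; field.

have v0 : forall n, 0 <= v n by move=> n; rewrite /v levE divr_ge0.
have e0 : (0 < ((4 * delta)%:R : R)^-1)%R by rewrite invr_gt0 ltr0n; lia.
have [l [hl vl]] := @feld_small R v v0 H _ e0 delta.
set L := lcs (Defs.prefix x l) (Defs.prefix y l) in levE vl.
have lpos : (0 < l)%N by lia.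
have arith : (4 * delta * (l - L) < l)%N.
  move: vl; rewrite /v levE ltr_pdivrMr ?ltr0n // => vl.
  have c0 : (0 < ((4 * delta)%:R : R))%R by rewrite ltr0n; lia.
  have ce : (((4 * delta)%:R : R)^-1 * (4 * delta)%:R = 1)%R by rewrite mulVf // gt_eqF.
  have : (((4 * delta)%:R : R) * ((l - L)%N)%:R < l%:R)%R 
    by move: vl; rewrite -(ltr_pM2l c0) mulrA [X in _ < X * _]mulrC ce mul1r.
  by rewrite -natrM ltr_nat.
have [m [msub mL]] := lcs_wit (Defs.prefix x l) (Defs.prefix y l).
have [m' szm' mE] := subseqP msub.
set I := mask m (iota 0 l); set J := mask m' (iota 0 l).
have hmap : map x I = map y J by rewrite /I /J !map_mask; exact: mE.
have szI : size I = L by rewrite -(size_map x) /I map_mask; exact: (esym mL).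
have szJ : size J = L by rewrite -(size_map y) -hmap size_map szI.
have sI : sorted ltn I by apply: sorted_mask; [exact: ltn_trans|exact: iota_ltn_sorted].
have sJ : sorted ltn J by apply: sorted_mask; [exact: ltn_trans|exact: iota_ltn_sorted].
have aI : all (fun i => i < l)%N I by apply/allP => i /mem_mask; rewrite mem_iota.
have aJ : all (fun i => i < l)%N J by apply/allP => i /mem_mask; rewrite mem_iota.
have Ll : (L <= l)%N by have := lcs_le (Defs.prefix x l) (Defs.prefix y l); rewrite size_mkseq.
have HB : ((2 * (l - L) + 1) * delta <= L)%N.
  case: (eqVneq L l) => [->|ne]; first by rewrite subnn; lia.
  nia.
have [t [ht hs]] := core I J l L delta sI sJ szI szJ aI aJ hd HB.
set a := nth 0%N I t; set b := nth 0%N J t.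
have blk : forall s, (s < delta)%N -> x (a + s)%N = y (b + s)%N.
  move=> s sd; have [e1 e2] := hs s sd.
  have E := congr1 (fun w => nth (x 0) w (t + s)) hmap; move: E => /=.
  rewrite (nth_map 0); last by rewrite szI; lia.
  rewrite (nth_map 0); last by rewrite szJ; lia.
  by rewrite e1 e2.
exists ((a + b * (delta - 1)) %% delta)%N; split; first exact: ltn_pmod.
apply/funext => n; rewrite iter_cshift.
pose r := (n + b * (delta - 1))%N.
have ee : (b + r = b * delta + n)%N.
  rewrite /r; have -> : (b * delta = b * (delta - 1) + b)%N by rewrite -mulnSr; congr (_ * _); lia.
  lia.
have e1 : y n = y (b + r %% delta)%N.
  by apply: hy; rewrite modnDmr ee modnMDl.
rewrite e1 -blk; last exact: ltn_pmod.
apply: hx; rewrite !modnDmr.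
have -> : (a + r = n + (a + b * (delta - 1)))%N by rewrite /r; lia.
by [].

Qed.
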